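(* Let $f_1,f_2,g_1,g_2:\mathbb R^n\to\mathbb R$ be convex and positively one-homogeneous with $g_1(x)-g_2(x)\ge0$ for all $x$, and let $r(x)=\frac{f_1(x)-f_2(x)}{g_1(x)-g_2(x)}$. Consider the generalized RatioDCA iteration: start from $x_0$ with $\|x_0\|_2=1$, $\lambda_0=r(x_0)$; given $x_k$ and $\lambda_k=r(x_k)$: if $\lambda_k\ge0$, pick $F_2\in\partial f_2(x_k)$, $G_1\in\partial g_1(x_k)$ and let $x_{k+1}$ be a minimizer over $\{\xi:\|\xi\|_2\le1\}$ of $f_1(\xi)-\langle\xi,F_2\rangle+\lambda_k\big(g_2(\xi)-\langle\xi,G_1\rangle\big)$; if $\lambda_k<0$, pick $F_2\in\partial f_2(x_k)$, $G_2\in\partial g_2(x_k)$ and let $x_{k+1}$ be a minimizer over $\{\xi:\|\xi\|_2\le1\}$ of $g_1(\xi)-\langle\xi,G_2\rangle+\frac1{\lambda_k}\big(\langle\xi,F_2\rangle-f_1(\xi)\big)$; then set $\lambda_{k+1}=r(x_{k+1})$. Assume the iteration is well defined, i.e. $g_1(x_k)-g_2(x_k)>0$ for all $k$. Then for each $k$, either $\lambda_{k+1}<\lambda_k$, or $\lambda_{k+1}=\lambda_k$ (so the method terminates) and $\lambda_{k+1}$ is a nonlinear eigenvalue of $r$ with nonlinear eigenvector $x_{k+1}$.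
   Context: $\partial$ denotes the subdifferential of a convex function; $\langle\cdot,\cdot\rangle$ the Euclidean inner product. A real $\lambda$ is a nonlinear eigenvalue of $r$ with nonlinear eigenvector $x$ if $0\in\partial f_1(x)-\partial f_2(x)-\lambda\big(\partial g_1(x)-\partial g_2(x)\big)$ (Minkowski sums/differences of sets). The method is stopped when the relative change of $\lambda_k$ falls below a tolerance; in particular it terminates when $\lambda_{k+1}=\lambda_k$. *)

(* Defs.v *)
From mathcomp Require Import all_boot all_order all_algebra.
From mathcomp Require Import reals.
Set Implicit Arguments. Unset Strict Implicit. Unset Printing Implicit Defensive.
Import Order.TTheory GRing.Theory Num.Theory.
Local Open Scope ring_scope.

Section Defs.
Variables (R : realType) (n : nat).
Implicit Types (x y v : 'rV[R]_n) (f : 'rV[R]_n -> R).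

Definition dotv x y : R := \sum_(i < n) x 0 i * y 0 i.
Definition norm2 x : R := Num.sqrt (dotv x x).

Definition convex_fun f : Prop :=
  forall x y (t : R), 0 <= t -> t <= 1 ->
    f (t *: x + (1 - t) *: y) <= t * f x + (1 - t) * f y.

Definition pos_one_homogeneous f : Prop :=
  forall (t : R) x, 0 < t -> f (t *: x) = t * f x.

Definition subgrad f x v : Prop :=
  forall y, f x + dotv v (y - x) <= f y.

Definition dc_ratio (f1 f2 g1 g2 : 'rV[R]_n -> R) x : R :=
  (f1 x - f2 x) / (g1 x - g2 x).

Definition nonlin_eigen (f1 f2 g1 g2 : 'rV[R]_n -> R) (lam : R) x : Prop :=
  exists s1 s2 t1 t2,
    [/\ subgrad f1 x s1, subgrad f2 x s2, subgrad g1 x t1, subgrad g2 x t2 &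
        s1 - s2 - lam *: (t1 - t2) = 0].

Definition ball_minimizer (phi : 'rV[R]_n -> R) xi : Prop :=
  norm2 xi <= 1 /\ forall z, norm2 z <= 1 -> phi xi <= phi z.

End Defs.

(* Main.v *)
Require Import Defs.
From mathcomp Require Import all_boot all_order all_algebra.
From mathcomp Require Import boolp classical_sets reals.
From mathcomp Require Import ring lra.
Import Order.TTheory GRing.Theory Num.Theory.
Local Open Scope ring_scope.

Section Dot.
Set Implicit Arguments.
Variables (R : realType) (n : nat).
Implicit Types (x y z s : 'rV[R]_n) (f p h : 'rV[R]_n -> R).

Lemma dotvC x y : dotv x y = dotv y x.
Proof. by apply: eq_bigr => i _; rewrite mulrC. Qed.
Lemma dotvDr x y z : dotv x (y + z) = dotv x y + dotv x z.
Proof. by rewrite /dotv -big_split; apply: eq_bigr => i _; rewrite mxE mulrDr. Qed.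
Lemma dotvZr x y c : dotv x (c *: y) = c * dotv x y.
Proof. by rewrite /dotv mulr_sumr; apply: eq_bigr => i _; rewrite mxE mulrCA. Qed.
Lemma dotvNr x y : dotv x (- y) = - dotv x y.
Proof. by rewrite -scaleN1r dotvZr mulN1r. Qed.
Lemma dotvBr x y z : dotv x (y - z) = dotv x y - dotv x z.
Proof. by rewrite dotvDr dotvNr. Qed.
Lemma dotv0r x : dotv x 0 = 0.
Proof. by rewrite -(scale0r (0 : 'rV[R]_n)) dotvZr mul0r. Qed.
Lemma dotvDl x y z : dotv (y + z) x = dotv y x + dotv z x.
Proof. by rewrite !(dotvC _ x) dotvDr. Qed.
Lemma dotvZl x y c : dotv (c *: y) x = c * dotv y x.
Proof. by rewrite !(dotvC _ x) dotvZr. Qed.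
Lemma dotvNl x y : dotv (- y) x = - dotv y x.
Proof. by rewrite !(dotvC _ x) dotvNr. Qed.
Definition infr {I : Type} (g : I -> R) : R := inf (range g).
Lemma infr_lb I (g : I -> R) b : (forall i, b <= g i) -> forall i, infr g <= g i.
Proof.
move=> hb i; have := @ge_inf R (range g).
by apply => //; first by exists b => _ [j _ <-].
Qed.
Lemma infr_glb I (g : I -> R) (i0 : I) m : (forall i, m <= g i) -> m <= infr g.
Proof.
move=> hm; apply: lb_le_inf; first by exists (g i0), i0.
by move=> _ [j _ <-].
Qed.

Definition sublin (P : 'rV[R]_n -> R) :=
  (forall c y, 0 < c -> P (c *: y) <= c * P y) /\ (forall y z, P (y + z) <= P y + P z).

Lemma sublin0 P : sublin P -> P 0 = 0.
Proof.
case=> hZ _; have h2' : (0:R) < 2 by lra.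
have h0 : (0:R) < 2^-1 by rewrite invr_gt0.
have h1 := hZ 2 0 h2'; have h2 := hZ (2^-1) 0 h0.
have e : 2 * (2^-1 * P 0) = P 0 by rewrite mulrA mulfV ?mul1r // gt_eqF.
rewrite scaler0 in h1; rewrite scaler0 in h2; move: e h2; set u := 2^-1 * P 0 => e' h; clearbody u.
apply/eqP; rewrite eq_le; apply/andP; split; lra.
Qed.

Lemma sublinZ P c y : sublin P -> 0 < c -> P (c *: y) = c * P y.
Proof.
move=> [hZ hD] c0; apply/eqP; rewrite eq_le hZ //=.
have := hZ c^-1 (c *: y) ltac:(by rewrite invr_gt0).
rewrite scalerA mulVf ?gt_eqF // scale1r => h.
by rewrite -ler_pdivlMl // ; move: h; rewrite mulrC.
Qed.

Lemma sublinN P y : sublin P -> - P (- y) <= P y.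
Proof.
move=> hP; have := hP.2 y (- y); rewrite subrr sublin0 //; lra.
Qed.

Lemma sublin_line P e a t : sublin P -> - P (- e) <= a -> a <= P e -> t * a <= P (t *: e).
Proof.
move=> hP h1 h2; case: (ltrgtP t 0) => ht.
- have -> : t *: e = (- t) *: (- e) by rewrite scaleNr scalerN opprK.
  rewrite sublinZ ?oppr_gt0 //; nra.
- rewrite sublinZ //; nra.
- by rewrite ht scale0r sublin0 // mul0r.
Qed.

Lemma step P e a : sublin P -> - P (- e) <= a -> a <= P e ->
  exists Q, [/\ sublin Q, (forall y, Q y <= P y), Q e <= a & Q (- e) <= - a].
Proof.
move=> hP h1 h2.
pose g y := fun t : R => P (y + t *: e) - t * a.
have gb y t : - P (- y) <= g y t.
  have := hP.2 (y + t *: e) (- y); rewrite addrC addKr.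
  have := @sublin_line P e a t hP h1 h2; rewrite /g; lra.
pose Q y := infr (g y).
have Qlb y (t : R) : Q y <= g y t by exact: (@infr_lb _ (g y) _ (gb y) t).
have Qglb y m : (forall t, m <= g y t) -> m <= Q y by exact: (@infr_glb _ (g y) 0).
exists Q; split.
- split.
  + move=> c y c0.
    have ci : 0 <= c^-1 by rewrite invr_ge0 ltW.
    have cn : c != 0 by rewrite gt_eqF.
    have h : c^-1 * Q (c *: y) <= Q y.
      apply: (Qglb) => t; have := Qlb (c *: y) (c * t).
      rewrite /g -scalerA -scalerDr (@sublinZ P) // -mulrA -mulrBr => h.
      by rewrite -[X in _ <= X](mulKf cn); apply: ler_wpM2l.
    by rewrite -[X in X <= _](mulKf (invr_neq0 cn)) invrK ler_wpM2l // ltW.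
  + move=> y z.
    have h (t s : R) : Q (y + z) <= g y t + g z s.
      have := Qlb (y + z) (t + s); rewrite /g => h.
      have := hP.2 (y + t *: e) (z + s *: e).
      have -> : y + t *: e + (z + s *: e) = y + z + (t + s) *: e.
        by rewrite scalerDl addrACA.
      lra.
    have H1 (t : R) : Q (y + z) - g y t <= Q z.
      by apply: (Qglb) => s; have := h t s; lra.
    have H2 : Q (y + z) - Q z <= Q y.
      by apply: (Qglb) => t; have := H1 t; lra.
    lra.
- move=> y; have := Qlb y 0; rewrite /g scale0r addr0 mul0r subr0; exact.
- have := Qlb e (-1); rewrite /g scaleN1r subrr sublin0 //; lra.
- have := Qlb (- e) 1; rewrite /g scale1r addNr sublin0 //; lra.
Qed.

Lemma coords P : sublin P -> forall m, exists Q (a : nat -> R),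
  [/\ sublin Q, (forall y, Q y <= P y) &
      forall i : 'I_n, (i < m)%N -> Q (delta_mx 0 i) <= a i /\ Q (- delta_mx 0 i) <= - a i].
Proof.
move=> hP; elim=> [|m [Q [a [hQ hQP ha]]]].
  by exists P, (fun _ => 0); split => // y; exact: lexx.
case: (ltnP m n) => hm.
  pose e := delta_mx 0 (Ordinal hm) : 'rV[R]_n.
  have [Q' [hQ' hQ'Q h1 h2]] := @step Q e (Q e) hQ (@sublinN Q e hQ) (lexx (Q e)).
  exists Q', (fun j => if j == m then Q e else a j); split => //.
    by move=> y; exact: le_trans (hQ'Q y) (hQP y).
  move=> i; rewrite ltnS leq_eqVlt; case/orP => [/eqP him | him].
    rewrite him eqxx; have -> : i = Ordinal hm by apply: val_inj.
    by split.
  rewrite (ltn_eqF him); have [hi1 hi2] := ha i him.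
  by split; apply: le_trans (hQ'Q _) _.
exists Q, a; split => // i hi; apply: ha; exact: leq_trans (ltn_ord i) hm.
Qed.

Lemma minorant P : sublin P -> exists s : 'rV[R]_n, forall y, dotv s y <= P y.
Proof.
move=> hP; have [Q [a [hQ hQP ha]]] := coords hP n.
exists (\row_i a i).
have term (i : 'I_n) (c : R) : Q (c *: delta_mx 0 i) <= a i * c.
  have [h1 h2] := ha i (ltn_ord i).
  case: (ltrgtP c 0) => hc.
  - have -> : c *: delta_mx 0 i = (- c) *: (- delta_mx 0 i) :> 'rV[R]_n.
      by rewrite scaleNr scalerN opprK.
    rewrite sublinZ ?oppr_gt0 //; nra.
  - rewrite sublinZ //; nra.
  - by rewrite hc scale0r sublin0 // mulr0.
have key y : Q y <= dotv (\row_i a i) y.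
  rewrite {1}(row_sum_delta y) /dotv.
  apply: (big_rec2 (fun u v => Q u <= v)); first by rewrite sublin0.
  move=> i v u _ h; rewrite mxE.
  apply: le_trans (hQ.2 _ _) _; apply: lerD => //; exact: term.
move=> y; have := key (- y); rewrite dotvNr => h.
have := @sublinN Q y hQ; have := hQP y; lra.
Qed.

Lemma subgrad_exists P x : sublin P ->
  exists s, (forall y, dotv s y <= P y) /\ dotv s x = P x.
Proof.
move=> hP.
have [Q1 [h1 h1P hx hnx]] := @step P x (P x) hP (@sublinN P x hP) (lexx (P x)).
have [s hs] := minorant h1.
exists s; split; first by move=> y; exact: le_trans (hs y) (h1P y).
have := hs (- x); rewrite dotvNr => h.
have := hs x; have := h1P x.
move=> a b; apply/eqP; rewrite eq_le; apply/andP; split; lra.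
Qed.

Lemma sandwich p h : sublin p -> sublin h -> (forall y, 0 <= p y + h y) ->
  exists s, forall y, - h y <= dotv s y /\ dotv s y <= p y.
Proof.
move=> hp hh hph.
pose g y := fun z => p (y + z) + h z.
have gb y z : - p (- y) <= g y z.
  have := hp.2 (y + z) (- y); rewrite addrC addKr.
  have := hph z; rewrite /g; lra.
pose Q y := infr (g y).
have Qlb y z : Q y <= g y z by exact: (@infr_lb _ (g y) _ (gb y) z).
have Qglb y m : (forall z, m <= g y z) -> m <= Q y by exact: (@infr_glb _ (g y) 0).
have hQ : sublin Q.
  split.
  + move=> c y c0.
    have ci : 0 <= c^-1 by rewrite invr_ge0 ltW.
    have cn : c != 0 by rewrite gt_eqF.
    have hc : c^-1 * Q (c *: y) <= Q y.
      apply: (Qglb) => z; have := Qlb (c *: y) (c *: z).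
      rewrite /g -scalerDr (@sublinZ p) // (@sublinZ h) // -mulrDr => h'.
      by rewrite -[X in _ <= X](mulKf cn); apply: ler_wpM2l.
    by rewrite -[X in X <= _](mulKf (invr_neq0 cn)) invrK ler_wpM2l // ltW.
  + move=> y z.
    have hs (t s : 'rV[R]_n) : Q (y + z) <= g y t + g z s.
      have := Qlb (y + z) (t + s); rewrite /g => h'.
      have := hp.2 (y + t) (z + s); have := hh.2 t s.
      have -> : y + t + (z + s) = y + z + (t + s) by rewrite addrACA.
      lra.
    have H1 (t : 'rV[R]_n) : Q (y + z) - g y t <= Q z.
      by apply: (Qglb) => s; have := hs t s; lra.
    have H2 : Q (y + z) - Q z <= Q y.
      by apply: (Qglb) => t; have := H1 t; lra.
    lra.
have [s hs] := minorant hQ.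
exists s => y; split.
  have := hs (- y); have := Qlb (- y) y; rewrite /g addNr sublin0 // add0r dotvNr.
  lra.
have := hs y; have := Qlb y 0; rewrite /g addr0 sublin0 // addr0; lra.
Qed.

Lemma hom0 f : pos_one_homogeneous f -> f 0 = 0.
Proof.
move=> hf; have h2 : (0:R) < 2 by lra.
have := hf 2 0 h2; rewrite scaler0 => e.
apply/eqP; rewrite eq_le; apply/andP; split; lra.
Qed.

Lemma cvx_sublin f : convex_fun f -> pos_one_homogeneous f -> sublin f.
Proof.
move=> cf hf; split.
  by move=> c y c0; rewrite hf.
move=> y z; have h2 : (0:R) < 2 by lra.
have hh : (0:R) <= 2^-1 by rewrite invr_ge0 ltW.
have hh1 : (2^-1 : R) <= 1 by rewrite invf_le1 //; lra.
have := cf y z _ hh hh1.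
have e : (1 - 2^-1 : R) = 2^-1 by field.
rewrite e -scalerDr => h.
have -> : y + z = 2 *: (2^-1 *: (y + z)) by rewrite scalerA mulfV ?scale1r // gt_eqF.
rewrite hf //; rewrite -mulrDr in h; have e2 : 2 * (2^-1 * (f y + f z)) = f y + f z.
  by rewrite mulrA mulfV ?mul1r // gt_eqF.
rewrite -e2; apply: ler_wpM2l => //; lra.
Qed.

Lemma sublin_lin p c : sublin p -> sublin (fun y => p y - dotv c y).
Proof.
move=> [hZ hD]; split.
  move=> k y k0; rewrite dotvZr; have := hZ k y k0; rewrite mulrBr; lra.
move=> y z; rewrite dotvDr; have := hD y z; lra.
Qed.

Lemma sublin_scale p k : sublin p -> 0 <= k -> sublin (fun y => k * p y).
Proof.
move=> [hZ hD] k0; split.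
  move=> c y c0; rewrite mulrCA; apply: ler_wpM2l => //; exact: hZ.
move=> y z; rewrite -mulrDr; apply: ler_wpM2l => //; exact: hD.
Qed.

Lemma euler f x s : pos_one_homogeneous f -> subgrad f x s ->
  f x = dotv s x /\ forall y, dotv s y <= f y.
Proof.
move=> hf hs.
have h0 := hs 0; rewrite hom0 // dotvBr dotv0r in h0.
have h2 := hs (2 *: x); rewrite hf ?ltr0n // dotvBr dotvZr in h2.
have e : f x = dotv s x by apply/eqP; rewrite eq_le; apply/andP; split; lra.
split => // y; have := hs y; rewrite dotvBr; lra.
Qed.

Lemma subgrad_of f x s : (forall y, dotv s y <= f y) -> f x = dotv s x -> subgrad f x s.
Proof. by move=> h e y; rewrite e dotvBr addrC subrK. Qed.
End Dot.

Unset Implicit Arguments.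

Lemma scale_ball (R : realType) (n : nat) (y : 'rV[R]_n) :
  exists c : R, 0 < c /\ norm2 (c *: y) <= 1.
Proof.
have N0 : 0 <= norm2 y by exact: sqrtr_ge0.
exists (norm2 y + 1)^-1; split; first by rewrite invr_gt0; lra.
set c := (norm2 y + 1)^-1.
have c0 : 0 < c by rewrite invr_gt0; lra.
have -> : norm2 (c *: y) = c * norm2 y.
  rewrite /norm2 dotvZl dotvZr mulrA -expr2 sqrtrM ?sqr_ge0 // sqrtr_sqr.
  by rewrite ger0_norm // ltW.
have e : c * (norm2 y + 1) = 1 by rewrite mulVf //; rewrite gt_eqF //; lra.
have : c * norm2 y <= c * (norm2 y + 1) by rewrite ler_wpM2l ?ltW //; lra.
by rewrite e.
Qed.

Lemma hom_nonneg (R : realType) (n : nat) (Phi : 'rV[R]_n -> R) :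
  (forall (c : R) y, 0 < c -> Phi (c *: y) = c * Phi y) ->
  (forall z, norm2 z <= 1 -> 0 <= Phi z) -> forall y, 0 <= Phi y.
Proof.
move=> hZ hb y; have [c [c0 hc]] := scale_ball _ _ y.
have := hb _ hc; rewrite hZ // => h.
by rewrite -(pmulr_rge0 _ c0).
Qed.

Theorem theorem4p1 (R : realType) (n : nat)
  (f1 f2 g1 g2 : 'rV[R]_n -> R)
  (x : nat -> 'rV[R]_n) (F2 G : nat -> 'rV[R]_n) :
  convex_fun f1 -> convex_fun f2 -> convex_fun g1 -> convex_fun g2 ->
  pos_one_homogeneous f1 -> pos_one_homogeneous f2 ->
  pos_one_homogeneous g1 -> pos_one_homogeneous g2 ->
  (forall y, 0 <= g1 y - g2 y) ->
  norm2 (x 0%N) = 1 ->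
  (forall k, 0 < g1 (x k) - g2 (x k)) ->
  (forall k, subgrad f2 (x k) (F2 k)) ->
  (forall k, 0 <= dc_ratio f1 f2 g1 g2 (x k) ->
     subgrad g1 (x k) (G k) /\
     ball_minimizer (fun xi => f1 xi - dotv xi (F2 k)
                               + dc_ratio f1 f2 g1 g2 (x k) * (g2 xi - dotv xi (G k)))
                    (x k.+1)) ->
  (forall k, dc_ratio f1 f2 g1 g2 (x k) < 0 ->
     subgrad g2 (x k) (G k) /\
     ball_minimizer (fun xi => g1 xi - dotv xi (G k)
                               + (dc_ratio f1 f2 g1 g2 (x k))^-1 * (dotv xi (F2 k) - f1 xi))
                    (x k.+1)) ->
  forall k,
    dc_ratio f1 f2 g1 g2 (x k.+1) < dc_ratio f1 f2 g1 g2 (x k) \/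
    (dc_ratio f1 f2 g1 g2 (x k.+1) = dc_ratio f1 f2 g1 g2 (x k) /\
     nonlin_eigen f1 f2 g1 g2 (dc_ratio f1 f2 g1 g2 (x k.+1)) (x k.+1)).
Proof.
move=> cf1 cf2 cg1 cg2 hf1 hf2 hg1 hg2 Dge x0n Dpos hF2 hpos hneg k.
have rD j : f1 (x j) - f2 (x j) = dc_ratio f1 f2 g1 g2 (x j) * (g1 (x j) - g2 (x j)).
  by rewrite /dc_ratio divfK // gt_eqF.
have ball j : norm2 (x j) <= 1.
  case: j => [|j]; first by rewrite x0n.
  case: (lerP 0 (dc_ratio f1 f2 g1 g2 (x j))) => hj.
    by have [_ [] ] := hpos j hj.
  by have [_ [] ] := hneg j hj.
have sf1 := cvx_sublin cf1 hf1; have sf2 := cvx_sublin cf2 hf2.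
have sg1 := cvx_sublin cg1 hg1; have sg2 := cvx_sublin cg2 hg2.
have D1 := Dpos k.+1; have D0 := Dpos k.
have rD1 := rD k.+1; have rD0 := rD k.
move: rD1 rD0 D1 D0.
set lam := dc_ratio f1 f2 g1 g2 (x k).
set lam1 := dc_ratio f1 f2 g1 g2 (x k.+1).
move=> rD1 rD0 D1 D0.
have [eF2 bF2] := euler hf2 (hF2 k).
case: (lerP 0 lam) => hl.
-
  have [hG [_ hmin]] := hpos k hl.
  have [eG bG] := euler hg1 hG.
  pose Phi := fun xi => f1 xi - dotv xi (F2 k) + lam * (g2 xi - dotv xi (G k)).
  have hm z : norm2 z <= 1 -> Phi (x k.+1) <= Phi z := hmin z.
  have Phik : Phi (x k) = 0.
    rewrite /Phi !(dotvC _ (x k)) -eF2 -eG; move: rD0; lra.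
  have lowP y : f1 y - f2 y - lam * (g1 y - g2 y) <= Phi y.
    rewrite /Phi !(dotvC _ y); have := bF2 y; have := bG y.
    have hh : 0 <= g1 y - dotv (G k) y by rewrite subr_ge0.
    have := mulr_ge0 hl hh; rewrite mulrBr.
    lra.
  have Pk1 : Phi (x k.+1) <= 0 by rewrite -Phik; apply: hm; exact: ball k.
  have lowk1 := lowP (x k.+1); rewrite rD1 in lowk1.
  have hle : lam1 <= lam.
    have : (lam1 - lam) * (g1 (x k.+1) - g2 (x k.+1)) <= 0 by rewrite mulrBl; lra.
    by rewrite pmulr_lle0 // subr_le0.
  rewrite le_eqVlt in hle; case/orP: hle => [/eqP e|lt]; last by left.
  right; rewrite e; split => //.
  have Phi1 : Phi (x k.+1) = 0.
    rewrite e in lowk1; apply/eqP; rewrite eq_le; apply/andP; split; lra.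
  have Pnn : forall y, 0 <= Phi y.
    apply: hom_nonneg.
      by move=> c y c0; rewrite /Phi hf1 // hg2 // !dotvZl; ring.
    by move=> z hz; rewrite -Phi1; exact: hm.
  have hh : 0 <= g1 (x k.+1) - dotv (G k) (x k.+1) by rewrite subr_ge0.
  have hh2 := mulr_ge0 hl hh.
  have hF := bF2 (x k.+1).
  move: Phi1; rewrite /Phi !(dotvC _ (x k.+1)) => Phi1.
  rewrite e in rD1.
  have eqF2 : f2 (x k.+1) = dotv (F2 k) (x k.+1).
    move: hh2; rewrite mulrBr => hh2.
    apply/eqP; rewrite eq_le; apply/andP; split; lra.
  have lamG : lam * (g1 (x k.+1) - dotv (G k) (x k.+1)) = 0.
    move: hh2; rewrite !mulrBr => hh2.
    apply/eqP; rewrite eq_le; apply/andP; split; lra.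
  have sF2 : subgrad f2 (x k.+1) (F2 k) by apply: subgrad_of.
  have [l0|lpos] := eqVneq lam 0.
    have [t1 [bt1 et1]] := subgrad_exists (x k.+1) sg1.
    have [t2 [bt2 et2]] := subgrad_exists (x k.+1) sg2.
    exists (F2 k), (F2 k), t1, t2; split => //.
    - apply: subgrad_of => [y|].
        by have := Pnn y; rewrite /Phi l0 mul0r addr0 dotvC; lra.
      by move: Phi1; rewrite l0 mul0r addr0; lra.
    - by apply: subgrad_of => //; rewrite et1.
    - by apply: subgrad_of => //; rewrite et2.
    - by rewrite l0 subrr scale0r subr0.
  have lp : 0 < lam by rewrite lt_neqAle eq_sym lpos hl.
  have eG1 : g1 (x k.+1) = dotv (G k) (x k.+1).
    by move/eqP: lamG; rewrite mulf_eq0 (negbTE lpos) /= subr_eq0 => /eqP.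
  have sG1 : subgrad g1 (x k.+1) (G k) by apply: subgrad_of.
  pose c := F2 k + lam *: G k.
  have hph : forall y, 0 <= (f1 y - dotv c y) + lam * g2 y.
    by move=> y; have := Pnn y; rewrite /Phi /c dotvDl dotvZl !(dotvC _ y); lra.
  have [s hs] := sandwich (sublin_lin c sf1) (sublin_scale lam sg2 (ltW lp)) hph.
  have [hs1 hs2] := hs (x k.+1).
  have ec : dotv c (x k.+1) = dotv (F2 k) (x k.+1) + lam * dotv (G k) (x k.+1).
    by rewrite /c dotvDl dotvZl.
  have hsx : dotv s (x k.+1) = - (lam * g2 (x k.+1)).
    apply/eqP; rewrite eq_le; apply/andP; split; lra.
  have li : lam^-1 * lam = 1 by rewrite mulVf.
  exists (c + s), (F2 k), (G k), (- lam^-1 *: s); split => //.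
  - apply: subgrad_of => [y|]; rewrite dotvDl; last lra.
    by have := (hs y).2; lra.
  - apply: subgrad_of => [y|]; rewrite dotvZl; last first.
      by rewrite hsx mulrN mulNr opprK mulrA li mul1r.
    have h0 : 0 <= lam^-1 * (dotv s y + lam * g2 y).
      by apply: mulr_ge0; [rewrite invr_ge0 ltW | have := (hs y).1; lra].
    by rewrite mulrDr mulrA li mul1r in h0; lra.
  - by apply/rowP => i; rewrite /c !mxE; field.
- have [hG [_ hmin]] := hneg k hl.
  have [eG bG] := euler hg2 hG.
  pose u := lam^-1.
  pose Psi := fun xi => g1 xi - dotv xi (G k) + u * (dotv xi (F2 k) - f1 xi).
  have hm z : norm2 z <= 1 -> Psi (x k.+1) <= Psi z := hmin z.
  have ln : lam != 0 by rewrite lt_eqF.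
  have ul : u * lam = 1 by rewrite mulVf.
  have u0 : u < 0 by rewrite invr_lt0.
  have Psik : Psi (x k) = 0.
    rewrite /Psi !(dotvC _ (x k)) -eF2 -eG.
    have : u * (f2 (x k) - f1 (x k)) = - (g1 (x k) - g2 (x k)).
      by rewrite -opprB rD0 mulrN mulrA ul mul1r.
    rewrite !mulrBr; lra.
  have lowP y : g1 y - g2 y + u * (f2 y - f1 y) <= Psi y.
    rewrite /Psi !(dotvC _ y); have := bF2 y; have := bG y.
    have hh : 0 <= f2 y - dotv (F2 k) y by rewrite subr_ge0.
    have := mulr_le0_ge0 (ltW u0) hh.
    rewrite !mulrBr; lra.
  have Pk1 : Psi (x k.+1) <= 0 by rewrite -Psik; apply: hm; exact: ball k.
  have lowk1 := lowP (x k.+1).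
  have E : lam * (u * (f2 (x k.+1) - f1 (x k.+1))) = f2 (x k.+1) - f1 (x k.+1).
    by rewrite mulrA (mulrC lam) ul mul1r.
  have hle : lam1 <= lam.
    have lk : g1 (x k.+1) - g2 (x k.+1) + u * (f2 (x k.+1) - f1 (x k.+1)) <= 0 by lra.
    have := mulr_le0 (ltW hl) lk; rewrite mulrDr E => h.
    have : 0 <= (lam - lam1) * (g1 (x k.+1) - g2 (x k.+1)) by rewrite mulrBl; lra.
    by rewrite pmulr_lge0 // subr_ge0.
  rewrite le_eqVlt in hle; case/orP: hle => [/eqP e|lt]; last by left.
  right; rewrite e; split => //.
  have E2 : u * (f2 (x k.+1) - f1 (x k.+1)) = - (g1 (x k.+1) - g2 (x k.+1)).
    by rewrite -opprB rD1 e mulrN mulrA ul mul1r.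
  have Psi1 : Psi (x k.+1) = 0.
    apply/eqP; rewrite eq_le; apply/andP; split; lra.
  have Pnn : forall y, 0 <= Psi y.
    apply: hom_nonneg.
      by move=> c y c0; rewrite /Psi hf1 // hg1 // !dotvZl; ring.
    by move=> z hz; rewrite -Psi1; exact: hm.
  have hh : 0 <= g2 (x k.+1) - dotv (G k) (x k.+1) by rewrite subr_ge0.
  have hF : dotv (F2 k) (x k.+1) - f2 (x k.+1) <= 0 by rewrite subr_le0.
  have hh2 := mulr_le0 (ltW u0) hF.
  move: Psi1; rewrite /Psi !(dotvC _ (x k.+1)) => Psi1.
  have eG2 : g2 (x k.+1) = dotv (G k) (x k.+1).
    move: hh2 E2; rewrite !mulrBr => hh2 E2'.
    apply/eqP; rewrite eq_le; apply/andP; split; lra.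
  have uF : u * (dotv (F2 k) (x k.+1) - f2 (x k.+1)) = 0.
    move: hh2 E2; rewrite !mulrBr => hh2 E2'.
    apply/eqP; rewrite eq_le; apply/andP; split; lra.
  have eqF2 : f2 (x k.+1) = dotv (F2 k) (x k.+1).
    have un : u != 0 by rewrite lt_eqF.
    by move/eqP: uF; rewrite mulf_eq0 (negbTE un) /= subr_eq0 => /eqP ->.
  have sF2 : subgrad f2 (x k.+1) (F2 k) by apply: subgrad_of.
  have sG2 : subgrad g2 (x k.+1) (G k) by apply: subgrad_of.
  pose c := G k - u *: F2 k.
  have hph : forall y, 0 <= (g1 y - dotv c y) + (- u) * f1 y.
    move=> y; have := Pnn y; rewrite /Psi /c dotvDl dotvNl dotvZl !(dotvC _ y).
    rewrite !mulrBr mulNr; lra.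
  have nu : 0 <= - u by rewrite oppr_ge0 ltW.
  have [s hs] := sandwich (sublin_lin c sg1) (sublin_scale (- u) sf1 nu) hph.
  have [hs1 hs2] := hs (x k.+1).
  have ec : dotv c (x k.+1) = dotv (G k) (x k.+1) - u * dotv (F2 k) (x k.+1).
    by rewrite /c dotvDl dotvNl dotvZl.
  rewrite mulNr opprK in hs1.
  have hsx : dotv s (x k.+1) = u * f1 (x k.+1).
    move: Psi1; rewrite !mulrBr => Psi1.
    apply/eqP; rewrite eq_le; apply/andP; split; lra.
  have lu : lam * u = 1 by rewrite mulrC.
  exists (lam *: s), (F2 k), (c + s), (G k); split => //.
  - apply: subgrad_of => [y|]; rewrite dotvZl; last first.
      by rewrite hsx mulrA lu mul1r.
    have := (hs y).1; rewrite mulNr opprK => h.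
    have := ler_wnM2l (ltW hl) h; rewrite mulrA lu mul1r; exact.
  - apply: subgrad_of => [y|]; rewrite dotvDl; last lra.
    by have := (hs y).2; lra.
  - by apply/rowP => i; rewrite /c /u !mxE; field.
Qed.
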